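(* Let $P_1,\ldots,P_n$ be mutually orthogonal self-adjoint projections on a real or complex Hilbert space $\mathcal{H}$, all of the same nonzero rank $k$, where $k$ may be finite or infinite. Let $r_1,\ldots,r_n\ge0$ be real numbers with $r=\sum_{i=1}^n r_i$, and set $A=r_1P_1+\cdots+r_nP_n$. If $r$ is an integer and $r\ge n$, then there exist self-adjoint projections $Q_1,\ldots,Q_r$, each of rank $k$, such that $A=Q_1+\cdots+Q_r$. *)

(* Defs.v *)
From HB Require Import structures.
From mathcomp Require Import all_boot all_order all_algebra.
From mathcomp Require Import reals.
From mathcomp Require Import complex.
Set Implicit Arguments. Unset Strict Implicit. Unset Printing Implicit Defensive.
Import Order.TTheory GRing.Theory Num.Theory.
Local Open Scope ring_scope.

Section Hilb.
Variables (K : numFieldType) (conj : K -> K) (H : lmodType K).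

Definition hilbert (ip : H -> H -> K) : Prop :=
  [/\ (forall (a : K) (x y z : H), ip (a *: x + y) z = a * ip x z + ip y z),
      (forall x y : H, ip y x = conj (ip x y)),
      (forall x : H, 0 <= ip x x),
      (forall x : H, ip x x = 0 -> x = 0) &
      (forall u : nat -> H,
         (forall e : K, 0 < e -> exists N : nat, forall m k : nat,
             (N <= m)%N -> (N <= k)%N -> ip (u m - u k) (u m - u k) < e) ->
         exists l : H, forall e : K, 0 < e -> exists N : nat, forall k : nat,
             (N <= k)%N -> ip (u k - l) (u k - l) < e)].

Definition lin_op (T : H -> H) : Prop :=
  forall (a : K) (x y : H), T (a *: x + y) = a *: T x + T y.

Definition sa_proj (ip : H -> H -> K) (P : H -> H) : Prop :=
  [/\ lin_op P, (forall x, P (P x) = P x) & (forall x y, ip (P x) y = ip x (P y))].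

(* rank P = rank Q (as Hilbert dimensions, finite or infinite): the ranges of
   P and Q are isometrically isomorphic, i.e. there is a linear map U which
   restricts to a unitary from ran P onto ran Q. *)
Definition same_rank (ip : H -> H -> K) (P Q : H -> H) : Prop :=
  exists U : H -> H,
    [/\ lin_op U,
        (forall x y, ip (U (P x)) (U (P y)) = ip (P x) (P y)),
        (forall x, Q (U (P x)) = U (P x)) &
        (forall y, exists x, U (P x) = Q y)].

Definition lemma7_for : Prop :=
  forall (ip : H -> H -> K), hilbert ip ->
  forall (n : nat) (P : 'I_n -> H -> H) (r : 'I_n -> K) (m : nat),
    (forall i, sa_proj ip (P i)) ->
    (forall i j, i != j -> forall x, P i (P j x) = 0) ->
    (forall i, exists x, P i x != 0) ->
    (forall i j, same_rank ip (P i) (P j)) ->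
    (forall i, 0 <= r i) ->
    \sum_(i < n) r i = m%:R ->
    (n <= m)%N ->
    exists Q : 'I_m -> H -> H,
      [/\ (forall j, sa_proj ip (Q j)),
          (forall j i, same_rank ip (Q j) (P i)) &
          (forall x, \sum_(i < n) r i *: P i x = \sum_(j < m) Q j x)].
End Hilb.

(* Main.v *)
Require Import Defs.
From HB Require Import structures.
From mathcomp Require Import all_boot all_order all_algebra.
From mathcomp Require Import reals complex.
From mathcomp Require Import ring lra.
Set Implicit Arguments. Unset Strict Implicit. Unset Printing Implicit Defensive.
Import Order.TTheory GRing.Theory Num.Theory.
Local Open Scope ring_scope.
From Stdlib Require Import ClassicalEpsilon.

Section Finite.
Variable R : rcfType.
Variable n : nat.

Definition dot (u v : 'rV[R]_n) := \sum_(a < n) u 0 a * v 0 a.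

Lemma dotC u v : dot u v = dot v u.
Proof. by apply: eq_bigr => a _; rewrite mulrC. Qed.

Lemma dotDl s t u v x : dot (s *: u + t *: v) x = s * dot u x + t * dot v x.
Proof.
rewrite /dot !mulr_sumr -big_split /=; apply: eq_bigr => a _.
by rewrite !mxE mulrDl !mulrA.
Qed.

Lemma dot_ge0 u : 0 <= dot u u.
Proof. by apply: sumr_ge0 => a _; rewrite -expr2 sqr_ge0. Qed.

Lemma sum_lift m (i : 'I_m.+1) (F : 'I_m.+1 -> R) :
  \sum_k F k = F i + \sum_(k < m) F (lift i k).
Proof. by rewrite (bigD1_ord i) //=. Qed.

Lemma sum_replace m (j : 'I_m) (F : 'I_m -> R) G :
  (forall k, k != j -> G k = F k) ->
  \sum_k G k = \sum_k F k - F j + G j.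
Proof.
move=> h; rewrite (bigD1 j) //= [in RHS](bigD1 j) //=.
rewrite (eq_bigr F) => [|k /h //]; lra.
Qed.

Lemma frame : forall m (v : 'I_m -> 'rV[R]_n),
 (forall k l, k != l -> dot (v k) (v l) = 0) ->
 \sum_k dot (v k) (v k) = m%:R ->
 exists w : 'I_m -> 'rV[R]_n, (forall k, dot (w k) (w k) = 1) /\
   forall x y, \sum_k dot (w k) x * dot (w k) y = \sum_k dot (v k) x * dot (v k) y.
Proof.
elim=> [|m IH] v horth hsum.
  by exists v; split => [[]|].
have [i hi] : exists i, 1 <= dot (v i) (v i).
  case/boolP: [exists i, 1 <= dot (v i) (v i)] => [/existsP //|/existsPn hlt].
  exfalso.
  have : \sum_k dot (v k) (v k) < \sum_(k < m.+1) 1.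
    apply: ltr_sum => [|k _]; first by apply/hasP; exists ord0; rewrite ?mem_index_enum.
    by have := hlt k; rewrite real_leNgt ?num_real // negbK.
  by rewrite hsum sumr_const card_ord ltxx.
set v' := fun k : 'I_m => v (lift i k).
have orth' : forall k l, k != l -> dot (v' k) (v' l) = 0.
  by move=> k l hkl; apply: horth; rewrite (inj_eq (@lift_inj _ i)).
have hsplit := sum_lift i (fun k => dot (v k) (v k)).
case: (eqVneq (dot (v i) (v i)) 1) => ha.
  have [w' [hw1 hw2]] := IH v' orth' ltac:(rewrite /v'; move: hsplit; rewrite hsum ha mulrSr; lra).
  exists (fun k => if unlift i k is Some k' then w' k' else v i); split.
    by move=> k; case: unliftP => [k' _|_] //.
  move=> x y; rewrite (sum_lift i) [in RHS](sum_lift i) unlift_none.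
  by congr (_ + _); rewrite -hw2; apply: eq_bigr => k _; rewrite liftK.
have ha1 : 1 < dot (v i) (v i) by rewrite lt_def ha hi.
have [j hj] : exists j, dot (v j) (v j) < 1.
  case/boolP: [exists j, dot (v j) (v j) < 1] => [/existsP //|/existsPn hge].
  exfalso.
  have : \sum_(k < m) 1 <= \sum_(k < m) dot (v' k) (v' k).
    apply: ler_sum => k _; have := hge (lift i k).
    by rewrite real_ltNge ?num_real // negbK.
  rewrite sumr_const card_ord; move: hsplit; rewrite hsum => hs.
  move: hs ha1; rewrite mulrSr /v'; lra.
case: (unliftP i j) => [j' hjj|hji]; last by move: hj; rewrite hji; lra.
set a := dot (v i) (v i) in hi ha ha1 hsplit *; set b := dot (v j) (v j) in hj *.
have hb0 : 0 <= b := dot_ge0 _.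
have hab : 0 < a - b by lra.
set c := Num.sqrt ((1 - b) / (a - b)); set s := Num.sqrt ((a - 1) / (a - b)).
have hc2 : c ^+ 2 = (1 - b) / (a - b) by rewrite sqr_sqrtr // divr_ge0 //; lra.
have hs2 : s ^+ 2 = (a - 1) / (a - b) by rewrite sqr_sqrtr // divr_ge0 //; lra.
have hcs : c ^+ 2 + s ^+ 2 = 1.
  rewrite hc2 hs2 -mulrDl.
  have -> : 1 - b + (a - 1) = a - b by ring.
  by rewrite divff // gt_eqF.
have hca : c ^+ 2 * a + s ^+ 2 * b = 1.
  rewrite hc2 hs2 ![_ / (a - b) * _]mulrAC -mulrDl.
  have -> : (1 - b) * a + (a - 1) * b = a - b by ring.
  by rewrite divff // gt_eqF.
have hij : dot (v i) (v j) = 0 by apply: horth; rewrite hjj neq_lift.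
have hji : dot (v j) (v i) = 0 by rewrite dotC.
set w0 := c *: v i + s *: v j.
set u := (- s) *: v i + c *: v j.
set v'' := fun k => if k == j' then u else v' k.
have orth'' : forall k l, k != l -> dot (v'' k) (v'' l) = 0.
  have hu : forall l, l != j' -> dot u (v' l) = 0.
    move=> l hl; rewrite dotDl /v' !horth ?mulr0 ?addr0 // ?neq_lift //.
    by rewrite hjj (inj_eq (@lift_inj _ i)) eq_sym.
  move=> k l hkl; rewrite /v''; case: (eqVneq k j') => [hk|hk]; case: (eqVneq l j') => [hl|hl].
  - by move: hkl; rewrite hk hl eqxx.
  - by apply: hu.
  - by rewrite dotC; apply: hu.
  - by apply: orth'.
have hrep : forall F : 'rV[R]_n -> R,
    \sum_k F (v'' k) = \sum_k F (v' k) - F (v j) + F u.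
  move=> F; rewrite (@sum_replace _ j' (fun k => F (v' k))) /v'' ?eqxx.
    by rewrite /v' -hjj.
  by move=> k /negbTE ->.
have huu : dot u u = a + b - 1.
  rewrite dotDl ![dot _ u]dotC !dotDl hij hji -/a -/b.
  transitivity ((c^+2+s^+2)*(a+b) - (c^+2*a + s^+2*b)); first by ring.
  by rewrite hcs hca; ring.
have hs'' : \sum_k dot (v'' k) (v'' k) = m%:R.
  rewrite (hrep (fun z => dot z z)) /= huu -/b.
  move: hsplit; rewrite hsum mulrSr /v' => hsplit.
  lra.
have [w'' [hw1 hw2]] := IH v'' orth'' hs''.
exists (fun k => if unlift i k is Some k' then w'' k' else w0); split.
  move=> k; case: unliftP => [k' _|_] //.
  rewrite /w0 dotDl ![dot _ (c *: _ + _)]dotC !dotDl hij hji -/a -/b.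
  move: hca; rewrite !expr2; lra.
move=> x y; rewrite (sum_lift i) [in RHS](sum_lift i) unlift_none.
under eq_bigr do rewrite liftK.
rewrite hw2 (hrep (fun z => dot z x * dot z y)) /= /w0 /u !dotDl /v'.
move: hcs; rewrite !expr2 => hcs.
set p := dot (v i) x; set q := dot (v j) x; set p' := dot (v i) y; set q' := dot (v j) y.
set S := \sum_(k < m) _.
have -> : (c * p + s * q) * (c * p' + s * q') = (c * c) * (p * p') + (s * s) * (q * q') + c * s * (p * q' + q * p') by ring.
have -> : (- s * p + c * q) * (- s * p' + c * q') = (s * s) * (p * p') + (c * c) * (q * q') - c * s * (p * q' + q * p') by ring.
have -> : s * s = 1 - c * c by lra.
ring.
Qed.

End Finite.

Section Lin.
Variables (K : numFieldType) (H : lmodType K).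

Lemma lin0 (T : H -> H) : lin_op T -> T 0 = 0.
Proof.
move=> hT; have := hT 1 0 0; rewrite !scale1r addr0 => /(congr1 (fun z => z - T 0)).
by rewrite subrr addrK.
Qed.

Lemma linD (T : H -> H) x y : lin_op T -> T (x + y) = T x + T y.
Proof. by move=> hT; have := hT 1 x y; rewrite !scale1r. Qed.

Lemma linZ (T : H -> H) a x : lin_op T -> T (a *: x) = a *: T x.
Proof. by move=> hT; have := hT a x 0; rewrite !addr0 (lin0 hT) addr0. Qed.

Lemma linS (T : H -> H) I (r : seq I) (P : pred I) F : lin_op T ->
  T (\sum_(i <- r | P i) F i) = \sum_(i <- r | P i) T (F i).
Proof. by move=> hT; apply: (big_morph T (fun x y => linD x y hT) (lin0 hT)). Qed.

Lemma linSZ (T : H -> H) I (r : seq I) (s : I -> K) F : lin_op T ->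
  T (\sum_(i <- r) s i *: F i) = \sum_(i <- r) s i *: T (F i).
Proof. by move=> hT; rewrite linS //; apply: eq_bigr => i _; rewrite linZ. Qed.

Lemma lin_comp (T S : H -> H) : lin_op T -> lin_op S -> lin_op (fun x => T (S x)).
Proof. by move=> hT hS a x y; rewrite hS hT. Qed.

Lemma sum_delta n (b0 : 'I_n) (F : 'I_n -> H) :
  \sum_b (b0 == b)%:R *: F b = F b0.
Proof.
rewrite (bigD1 b0) //= eqxx scale1r big1 ?addr0 // => b hb.
by rewrite eq_sym (negbTE hb) scale0r.
Qed.

Lemma swap_scale I J (ri : seq I) (rj : seq J) (al : I -> K) (be : I -> J -> K) (X : J -> H) :
  \sum_(e <- ri) al e *: \sum_(b <- rj) be e b *: X b =
  \sum_(b <- rj) (\sum_(e <- ri) al e * be e b) *: X b.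
Proof.
under eq_bigr do rewrite scaler_sumr.
rewrite exchange_big /=; apply: eq_bigr => b _.
by rewrite scaler_suml; apply: eq_bigr => e _; rewrite scalerA.
Qed.

Lemma collapse n (F : 'I_n -> 'I_n -> K) (X : 'I_n -> H) e :
  \sum_a \sum_b F a b *: ((e == a)%:R *: X b) = \sum_b F e b *: X b.
Proof.
under eq_bigr do under eq_bigr do rewrite scalerA mulrC -scalerA.
under eq_bigr do rewrite -scaler_sumr.
by rewrite sum_delta.
Qed.
End Lin.

Section Abs.
Variables (K : numFieldType) (conj : K -> K) (H : lmodType K) (ip : H -> H -> K).
Hypotheses (ipL : forall (a : K) (x y z : H), ip (a *: x + y) z = a * ip x z + ip y z)
  (ipC : forall x y : H, ip y x = conj (ip x y))
  (conjD : forall a b, conj (a + b) = conj a + conj b)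
  (conjM : forall a b, conj (a * b) = conj a * conj b).

Lemma ip0l z : ip 0 z = 0.
Proof.
have := ipL 1 0 0 z; rewrite scale1r addr0 mul1r => /(congr1 (fun t => t - ip 0 z)).
by rewrite subrr addrK.
Qed.

Lemma ipDl x y z : ip (x + y) z = ip x z + ip y z.
Proof. by have := ipL 1 x y z; rewrite scale1r mul1r. Qed.

Lemma ipZl a x z : ip (a *: x) z = a * ip x z.
Proof. by have := ipL a x 0 z; rewrite addr0 ip0l addr0. Qed.

Lemma ipSl I (r : seq I) (s : I -> K) F z :
  ip (\sum_(i <- r) s i *: F i) z = \sum_(i <- r) s i * ip (F i) z.
Proof.
rewrite (big_morph (fun x => ip x z) (fun x y => ipDl x y z) (ip0l z)).
by apply: eq_bigr => i _; rewrite ipZl.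
Qed.

Lemma ipSl0 I (r : seq I) F z :
  ip (\sum_(i <- r) F i) z = \sum_(i <- r) ip (F i) z.
Proof. exact: (big_morph (fun x => ip x z) (fun x y => ipDl x y z) (ip0l z)). Qed.

Lemma conj0 : conj 0 = 0.
Proof. by have := conjD 0 0; rewrite addr0 => /(congr1 (fun t => t - conj 0)); rewrite subrr addrK. Qed.

Lemma ipSr I (r : seq I) (s : I -> K) F z :
  (forall i, conj (s i) = s i) ->
  ip z (\sum_(i <- r) s i *: F i) = \sum_(i <- r) s i * ip z (F i).
Proof.
move=> hs; rewrite ipC ipSl (big_morph conj conjD conj0).
by apply: eq_bigr => i _; rewrite conjM hs -ipC.
Qed.

Lemma ipSr0 I (r : seq I) F z :
  ip z (\sum_(i <- r) F i) = \sum_(i <- r) ip z (F i).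
Proof.
rewrite ipC ipSl0 (big_morph conj conjD conj0).
by apply: eq_bigr => i _; rewrite -ipC.
Qed.

Variables (n : nat) (P : 'I_n -> H -> H) (W : 'I_n -> 'I_n -> H -> H).
Hypotheses (hWlin : forall a b, lin_op (W a b))
  (hWW : forall a b c d y, W a b (W c d y) = (b == c)%:R *: W a d y)
  (hWadj : forall a b x y, ip (W a b x) y = ip x (W b a y))
  (hPW : forall a y, W a a y = P a y).
Variables (m : nat) (r : 'I_n -> K) (c : 'I_m -> 'I_n -> K).
Hypotheses (hc1 : forall j, \sum_a c j a * c j a = 1)
  (hc2 : forall a b, \sum_j c j a * c j b = if a == b then r a else 0)
  (hcc : forall j a, conj (c j a) = c j a).

Lemma hccM j a b : conj (c j a * c j b) = c j a * c j b.
Proof. by rewrite conjM !hcc. Qed.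

Definition Q j x := \sum_a \sum_b (c j a * c j b) *: W a b x.

Lemma Q_lin j : lin_op (Q j).
Proof.
move=> al x y; rewrite /Q scaler_sumr -big_split; apply: eq_bigr => a _.
rewrite scaler_sumr -big_split; apply: eq_bigr => b _.
by rewrite hWlin scalerDr !scalerA mulrC.
Qed.

Lemma QQ j x : Q j (Q j x) = Q j x.
Proof.
rewrite {1 2}/Q; under eq_bigr do under eq_bigr do rewrite linS //.
under eq_bigr do under eq_bigr do under eq_bigr do rewrite linSZ //.
under eq_bigr do under eq_bigr do under eq_bigr do under eq_bigr do rewrite hWW.
under eq_bigr do under eq_bigr do rewrite collapse.
under eq_bigr do rewrite swap_scale.
rewrite /Q; apply: eq_bigr => a _; apply: eq_bigr => d _; congr (_ *: _).
rewrite -[RHS]mul1r -(hc1 j) !mulr_suml; apply: eq_bigr => b _; ring.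
Qed.

Lemma Q_sa j x y : ip (Q j x) y = ip x (Q j y).
Proof.
rewrite /Q ipSl0 ipSr0.
under eq_bigr do rewrite ipSl.
under [RHS]eq_bigr => a _.
  rewrite ipSr; last exact: hccM.
  over.
rewrite exchange_big /=; apply: eq_bigr => a _; apply: eq_bigr => b _.
by rewrite hWadj [c j b * c j a]mulrC.
Qed.

Lemma Q_sum x : \sum_(i < n) r i *: P i x = \sum_(j < m) Q j x.
Proof.
rewrite /Q exchange_big /=; apply: eq_bigr => a _.
rewrite exchange_big /=.
under eq_bigr do rewrite -scaler_suml hc2.
rewrite (bigD1 a) //= eqxx hPW big1 ?addr0 // => b hb.
by rewrite eq_sym (negbTE hb) scale0r.
Qed.

Lemma Q_rank j i : same_rank ip (Q j) (P i).
Proof.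
exists (fun y => \sum_a c j a *: W i a y).
have hT : forall x, \sum_a c j a *: W i a (Q j x) = \sum_d c j d *: W i d x.
  move=> x; rewrite /Q; under eq_bigr do rewrite linS //.
  under eq_bigr do under eq_bigr do rewrite linSZ //.
  under eq_bigr do under eq_bigr do under eq_bigr do rewrite hWW.
  under eq_bigr do rewrite collapse.
  rewrite swap_scale; apply: eq_bigr => d _; congr (_ *: _).
  rewrite -[RHS]mul1r -(hc1 j) !mulr_suml; apply: eq_bigr => b _; ring.
split.
- move=> al x y; rewrite scaler_sumr -big_split; apply: eq_bigr => a _.
  by rewrite hWlin scalerDr !scalerA mulrC.
- move=> x y; rewrite !hT ipSl.
  under eq_bigr do rewrite hWadj linSZ //.
  under eq_bigr do under eq_bigr do rewrite hWW eqxx scale1r.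
  under eq_bigr do rewrite ipSr //.
  rewrite Q_sa QQ /Q ipSr0; apply: eq_bigr => a _.
  rewrite ipSr; last exact: hccM.
  by rewrite mulr_sumr; apply: eq_bigr => b _; rewrite mulrA.
- move=> x; rewrite hT -hPW linSZ //.
  by apply: eq_bigr => d _; rewrite hWW eqxx scale1r.
- move=> y; exists (\sum_e c j e *: W e i y); rewrite hT.
  under eq_bigr do rewrite linSZ //.
  under eq_bigr do under eq_bigr do rewrite hWW.
  under eq_bigr do under eq_bigr do rewrite scalerA mulrC -scalerA.
  under eq_bigr do rewrite sum_delta scalerA.
  by rewrite -scaler_suml hc1 scale1r hPW.
Qed.
End Abs.
Section Build.
Variables (K : numFieldType) (H : lmodType K) (ip : H -> H -> K).
Hypotheses (ipL : forall (a : K) (x y z : H), ip (a *: x + y) z = a * ip x z + ip y z)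
  (ipdef : forall x : H, ip x x = 0 -> x = 0).
Variables (n : nat) (P : 'I_n -> H -> H) (i0 : 'I_n) (U : 'I_n -> H -> H).
Hypotheses (hP : forall i, sa_proj ip (P i))
  (horth : forall i j, i != j -> forall x, P i (P j x) = 0)
  (hU : forall a, [/\ lin_op (U a),
        (forall x y, ip (U a (P i0 x)) (U a (P i0 y)) = ip (P i0 x) (P i0 y)),
        (forall x, P a (U a (P i0 x)) = U a (P i0 x)) &
        (forall y, exists x, U a (P i0 x) = P a y)]).

Lemma Plin a : lin_op (P a). Proof. by case: (hP a). Qed.
Lemma Pid a x : P a (P a x) = P a x. Proof. by case: (hP a). Qed.
Lemma Psa a x y : ip (P a x) y = ip x (P a y). Proof. by case: (hP a). Qed.
Lemma Ulin a : lin_op (U a). Proof. by case: (hU a). Qed.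
Lemma Uiso a x y : ip (U a (P i0 x)) (U a (P i0 y)) = ip (P i0 x) (P i0 y).
Proof. by case: (hU a). Qed.
Lemma Uinto a x : P a (U a (P i0 x)) = U a (P i0 x). Proof. by case: (hU a). Qed.

Lemma ex_G a y : exists x, U a (P i0 x) == P a y.
Proof. by case: (hU a) => _ _ _ /(_ y) [x hx]; exists x; apply/eqP. Qed.

Definition V a z := U a (P i0 z).
Definition G a y := P i0 (xchoose (ex_G a y)).

Lemma Vlin a : lin_op (V a). Proof. exact: lin_comp (Ulin a) (Plin i0). Qed.

Lemma linB (T : H -> H) x y : lin_op T -> T (x - y) = T x - T y.
Proof. by move=> hT; rewrite linD // -scaleN1r linZ // scaleN1r. Qed.

Lemma Vuniq a z z' : V a z = V a z' -> P i0 z = P i0 z'.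
Proof.
move=> h; apply/eqP; rewrite -subr_eq0 -(linB _ _ (Plin i0)); apply/eqP/ipdef.
have e : V a (z - z') = 0 by rewrite (linB _ _ (Vlin a)) h subrr.
rewrite -(Uiso a); change (ip (V a (z - z')) (V a (z - z')) = 0); rewrite e.
have := ipL 1 0 0 0; rewrite scale1r addr0 mul1r => /(congr1 (fun t => t - ip 0 0)).
by rewrite subrr addrK.
Qed.

Lemma G1 a y : P i0 (G a y) = G a y. Proof. exact: Pid. Qed.

Lemma G2 a y : V a (G a y) = P a y.
Proof. by rewrite /V /G Pid; apply/eqP; exact: (xchooseP (ex_G a y)). Qed.

Lemma G3 a z : G a (V a z) = P i0 z.
Proof.
rewrite -G1; apply: Vuniq (a) _ _ _; rewrite G2 /V; exact: Uinto.
Qed.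

Lemma G4 a y : P a y = 0 -> G a y = 0.
Proof.
move=> h; rewrite -G1 -(lin0 (Plin i0)); apply: (@Vuniq a).
by rewrite G2 h /V (lin0 (Plin i0)) (lin0 (Ulin a)).
Qed.

Lemma Glin a : lin_op (G a).
Proof.
move=> al y y'; transitivity (P i0 (al *: G a y + G a y')); last first.
  by rewrite (Plin i0) !G1.
rewrite -G1; apply: (@Vuniq a); rewrite G2 Vlin !G2; exact: Plin.
Qed.

Definition W a b y := V a (G b y).

Lemma Wlin a b : lin_op (W a b). Proof. exact: lin_comp (Vlin a) (Glin b). Qed.

Lemma WW a b c d y : W a b (W c d y) = (b == c)%:R *: W a d y.
Proof.
rewrite /W; case: (eqVneq b c) => [->|hbc].
  by rewrite G3 G1 scale1r.
rewrite scale0r G4 ?(lin0 (Vlin a)) //.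
by rewrite /V -(Uinto c (G d y)) horth.
Qed.

Lemma Wadj a b x y : ip (W a b x) y = ip x (W b a y).
Proof.
rewrite /W; transitivity (ip (G b x) (G a y)).
  have e1 : V a (G b x) = P a (V a (G b x)) := esym (Uinto a _).
  rewrite e1 Psa -G2 /V (Uiso a) !G1 //.
have e1 : V b (G a y) = P b (V b (G a y)) := esym (Uinto b _).
rewrite e1 -Psa -G2 /V (Uiso b) !G1 //.
Qed.

Lemma WP a y : W a a y = P a y. Proof. exact: G2. Qed.
End Build.

Lemma dot_delta (R : rcfType) n (u : 'rV[R]_n) a : dot u (delta_mx 0 a) = u 0 a.
Proof.
rewrite /dot (bigD1 a) //= mxE !eqxx mulr1 big1 ?addr0 // => b hb.
by rewrite mxE eqxx /=; case: eqP => [hab|]; rewrite ?mulr0 //; by rewrite hab eqxx in hb.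
Qed.


Theorem gen (R : rcfType) (K : numFieldType) (conj : K -> K) (emb : {rmorphism R -> K})
  (proj : K -> R) (H : lmodType K) :
  (forall a b, conj (a + b) = conj a + conj b) ->
  (forall a b, conj (a * b) = conj a * conj b) ->
  (forall x, conj (emb x) = emb x) ->
  (forall x, 0 <= x -> 0 <= proj x /\ emb (proj x) = x) ->
  lemma7_for conj H.
Proof.
move=> conjD conjM conjE hproj ip [ipL ipC _ ipdef _] n P r m hP horth _ hrank hr hsum hnm.
case: n P r hP horth hrank hr hsum hnm => [|n] P r hP horth hrank hr hsum hnm.
  move: hsum; rewrite big_ord0 => /esym/eqP; rewrite pnatr_eq0 => /eqP hm; subst m.
  exists (fun _ x => x); split; try by case.
  by move=> x; rewrite !big_ord0.
set i0 : 'I_n.+1 := ord0.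
pose U a := proj1_sig (constructive_indefinite_description _ (hrank i0 a)).
have hU : forall a, [/\ lin_op (U a),
        (forall x y, ip (U a (P i0 x)) (U a (P i0 y)) = ip (P i0 x) (P i0 y)),
        (forall x, P a (U a (P i0 x)) = U a (P i0 x)) &
        (forall y, exists x, U a (P i0 x) = P a y)].
  by move=> a; exact: (proj2_sig (constructive_indefinite_description _ (hrank i0 a))).
pose r' i := proj (r i).
have hr0 : forall i, 0 <= r' i by move=> i; case: (hproj _ (hr i)).
have hrE : forall i, emb (r' i) = r i by move=> i; case: (hproj _ (hr i)).
have hsum' : \sum_i r' i = m%:R.
  apply: (fmorph_inj emb); rewrite rmorph_sum rmorph_nat -hsum.
  by apply: eq_bigr => i _; rewrite hrE.
pose v (k : 'I_m) : 'rV[R]_n.+1 := \row_a (if (a == k :> nat) then Num.sqrt (r' a) else 0).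
have hvv : forall k l a b, v k 0 a * v l 0 b =
    if (a == k :> nat) && (b == l :> nat) then Num.sqrt (r' a) * Num.sqrt (r' b) else 0.
  move=> k l a b; rewrite !mxE.
  by case: (a == k :> nat); case: (b == l :> nat); rewrite ?mulr0 ?mul0r.
have horthv : forall k l, k != l -> dot (v k) (v l) = 0.
  move=> k l hkl; apply: big1 => a _; rewrite hvv.
  case: eqP => //= hk; case: eqP => //= hl.
  by move: hkl; rewrite (_ : k = l) ?eqxx //; apply: val_inj; rewrite /= -hk -hl.
have hone : forall a : 'I_n.+1, \sum_(k < m) (if (a == k :> nat) then r' a else 0) = r' a.
  move=> a; have ha : (a < m)%N by apply: leq_trans (ltn_ord a) hnm.
  rewrite (bigD1 (Ordinal ha)) //= eqxx big1 ?addr0 // => k hk.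
  case: eqP => // hak; move: hk; rewrite (_ : k = Ordinal ha) ?eqxx //.
  by apply: val_inj; rewrite /= hak.
have hsumv : \sum_k dot (v k) (v k) = m%:R.
  rewrite -hsum' /dot exchange_big /=; apply: eq_bigr => a _.
  rewrite -[RHS]hone; apply: eq_bigr => k _; rewrite hvv andbb.
  by case: ifP => // _; rewrite -expr2 sqr_sqrtr.
have [w [hw1 hw2]] := frame horthv hsumv.
pose c j a := emb (w j 0 a).
have hc1 : forall j, \sum_a c j a * c j a = 1.
  move=> j; rewrite -(rmorph1 emb) -(hw1 j) /dot rmorph_sum.
  by apply: eq_bigr => a _; rewrite rmorphM.
have hc2 : forall a b, \sum_j c j a * c j b = if a == b then r a else 0.
  move=> a b; have := hw2 (delta_mx 0 a) (delta_mx 0 b).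
  under eq_bigr do rewrite !dot_delta.
  under [in RHS]eq_bigr do rewrite !dot_delta hvv.
  move=> e.
  have e2 : \sum_j w j 0 a * w j 0 b = if a == b then r' a else 0.
    rewrite e; case: (eqVneq a b) => [<-|hab].
      rewrite -[RHS]hone; apply: eq_bigr => k _; rewrite andbb.
      by case: ifP => // _; rewrite -expr2 sqr_sqrtr.
    apply: big1 => k _; case: eqP => //= hak; case: eqP => //= hbk.
    by move: hab; rewrite (_ : a = b) ?eqxx //; apply: val_inj; rewrite /= hak hbk.
  rewrite /c; under eq_bigr do rewrite -rmorphM.
  rewrite -rmorph_sum e2; case: (a == b); by rewrite ?hrE ?rmorph0.
have hcc : forall j a, conj (c j a) = c j a by move=> j a; exact: conjE.
have hWlin : forall a b, lin_op (W hU a b).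
  by move=> a b; apply: Wlin => //; apply: ipdef.
have hWW : forall a b c d y, W hU a b (W hU c d y) = (b == c)%:R *: W hU a d y.
  by move=> a b c0 d y; apply: WW => //; apply: ipdef.
have hWadj : forall a b x y, ip (W hU a b x) y = ip x (W hU b a y).
  by move=> a b x y; apply: Wadj => //; apply: ipdef.
have hPW : forall a y, W hU a a y = P a y.
  by move=> a y; apply: WP => //; apply: ipdef.
exists (Q (W hU) c); split.
- move=> j; split.
  + exact: Q_lin.
  + exact: QQ.
  + exact: Q_sa.
- move=> j i; apply: Q_rank.
  all: try exact ipL. all: try exact ipC. all: try exact conjD. all: try exact conjM. all: try exact hWlin. all: try exact hWW. all: try exact hWadj. all: try (move=> *; apply: WP => //; apply: ipdef). all: try exact hc1. all: try exact hc2. all: try exact hcc.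
- apply: Q_sum; last exact hc2.
  by move=> *; apply: WP => //; apply: ipdef.
Qed.

Unset Implicit Arguments.
Theorem lemma7 (R : realType) :
  (forall H : lmodType R, lemma7_for (fun x : R => x) H) /\
  (forall H : lmodType (complex R), lemma7_for (fun z : complex R => z^*) H).
Proof.
split => H.
  apply: (@gen R R (fun x => x) idfun (fun x => x)) => //.
apply: (@gen R (complex R) (fun z => z^*) (real_complex R) (@complex.Re R)).
- by move=> a b; rewrite rmorphD.
- by move=> a b; rewrite rmorphM.
- by move=> x /=; exact: conjc_real.
- case=> a b; rewrite lecE /= => /andP [/eqP hb ha]; split => //.
  by rewrite /= hb.
Qed.
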